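(* Let $F$ be any one of the functions $H_{\mathrm{pen}}$, $V_{\mathrm{pen}}$, $W_{\mathrm{pen}}$, $U$ on $\Lambda^M$ defined below (for a fixed realization of $\mathbf y$). Then $F$ is convex and differentiable, and for all $\boldsymbol\theta,\boldsymbol\theta_0\in\Lambda^M$, \[F(\boldsymbol\theta)=F(\boldsymbol\theta_0)+\nabla F(\boldsymbol\theta_0)^T(\boldsymbol\theta-\boldsymbol\theta_0)+\tfrac12\|\hat{\boldsymbol\mu}_{\boldsymbol\theta}-\hat{\boldsymbol\mu}_{\boldsymbol\theta_0}\|_2^2.\] Furthermore, if $\hat{\boldsymbol\theta}$ is a minimizer of $F$ over $\Lambda^M$, then for all $\boldsymbol\theta\in\Lambda^M$, $F(\boldsymbol\theta)\ge F(\hat{\boldsymbol\theta})+\tfrac12\|\hat{\boldsymbol\mu}_{\boldsymbol\theta}-\hat{\boldsymbol\mu}_{\hat{\boldsymbol\theta}}\|_2^2$.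
   Context: Data $\mathbf y\in\mathbf R^n$; for $j=1,\dots,M$, $\hat{\boldsymbol\mu}_j=A_j\mathbf y+\mathbf b_j$ with $n\times n$ matrices $A_j$ and $\mathbf b_j\in\mathbf R^n$. $\Lambda^M=\{\boldsymbol\theta\in\mathbf R^M:\sum_j\theta_j=1,\theta_j\ge0\}$; $A_{\boldsymbol\theta}=\sum_j\theta_jA_j$, $\mathbf b_{\boldsymbol\theta}=\sum_j\theta_j\mathbf b_j$, $\hat{\boldsymbol\mu}_{\boldsymbol\theta}=A_{\boldsymbol\theta}\mathbf y+\mathbf b_{\boldsymbol\theta}$. $\mathrm{pen}(\boldsymbol\theta)=\sum_j\theta_j\|\hat{\boldsymbol\mu}_{\boldsymbol\theta}-\hat{\boldsymbol\mu}_j\|_2^2$. With $\sigma^2>0$, $\hat\sigma^2\in\mathbf R$, $\hat K^2\ge0$ and $\boldsymbol\pi\in\Lambda^M$ with positive entries: $H_{\mathrm{pen}}(\boldsymbol\theta)=\|\hat{\boldsymbol\mu}_{\boldsymbol\theta}\|_2^2-2\mathbf y^T\hat{\boldsymbol\mu}_{\boldsymbol\theta}+2\sigma^2\mathrm{Tr}(A_{\boldsymbol\theta})+\frac12\mathrm{pen}(\boldsymbol\theta)$; $V_{\mathrm{pen}}(\boldsymbol\theta)=H_{\mathrm{pen}}(\boldsymbol\theta)+46\sigma^2\sum_j\theta_j\log(1/\pi_j)$; $W_{\mathrm{pen}}(\boldsymbol\theta)=\|\hat{\boldsymbol\mu}_{\boldsymbol\theta}\|_2^2-2\mathbf y^T\hat{\boldsymbol\mu}_{\boldsymbol\theta}+2\hat\sigma^2\mathrm{Tr}(A_{\boldsymbol\theta})+\frac12\mathrm{pen}(\boldsymbol\theta)$;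 $U(\boldsymbol\theta)=\|\hat{\boldsymbol\mu}_{\boldsymbol\theta}\|_2^2-2\mathbf y^T\hat{\boldsymbol\mu}_{\boldsymbol\theta}+\frac12\mathrm{pen}(\boldsymbol\theta)+32\hat K^2\sum_j\theta_j\log(1/\pi_j)$. These functions are polynomials in $\boldsymbol\theta\in\mathbf R^M$, and $\nabla F$ is their gradient. *)

(* Defs.v *)
From HB Require Import structures.
From mathcomp Require Import all_boot all_order all_algebra.
From mathcomp Require Import all_classical all_reals all_analysis.
Set Implicit Arguments. Unset Strict Implicit. Unset Printing Implicit Defensive.
Import Order.TTheory GRing.Theory Num.Theory.
Import numFieldNormedType.Exports.
Local Open Scope ring_scope.

Section Aggregation.
Variables (R : realType) (n M : nat).

Definition dotv (k : nat) (u v : 'cV[R]_k) : R := \sum_(i < k) u i 0 * v i 0.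
Definition sqnorm (k : nat) (v : 'cV[R]_k) : R := \sum_(i < k) v i 0 ^+ 2.

Definition simplex (th : 'cV[R]_M) : Prop :=
  (forall j, 0 <= th j 0) /\ \sum_(j < M) th j 0 = 1.

Variables (y : 'cV[R]_n) (A : 'I_M -> 'M[R]_n) (b : 'I_M -> 'cV[R]_n).

Definition A_th (th : 'cV[R]_M) : 'M[R]_n := \sum_(j < M) th j 0 *: A j.
Definition b_th (th : 'cV[R]_M) : 'cV[R]_n := \sum_(j < M) th j 0 *: b j.
Definition mu_j (j : 'I_M) : 'cV[R]_n := A j *m y + b j.
Definition mu_th (th : 'cV[R]_M) : 'cV[R]_n := A_th th *m y + b_th th.

Definition pen (th : 'cV[R]_M) : R :=
  \sum_(j < M) th j 0 * sqnorm (mu_th th - mu_j j).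

Definition KL_pi (pi : 'I_M -> R) (th : 'cV[R]_M) : R :=
  \sum_(j < M) th j 0 * ln (pi j)^-1.

Definition Hpen (sig2 : R) (th : 'cV[R]_M) : R :=
  sqnorm (mu_th th) - 2 * dotv y (mu_th th) + 2 * sig2 * \tr (A_th th)
  + 2^-1 * pen th.

Definition Vpen (sig2 : R) (pi : 'I_M -> R) (th : 'cV[R]_M) : R :=
  Hpen sig2 th + 46 * sig2 * KL_pi pi th.

Definition Wpen (sighat2 : R) (th : 'cV[R]_M) : R :=
  sqnorm (mu_th th) - 2 * dotv y (mu_th th) + 2 * sighat2 * \tr (A_th th)
  + 2^-1 * pen th.

Definition Ufun (Khat2 : R) (pi : 'I_M -> R) (th : 'cV[R]_M) : R :=
  sqnorm (mu_th th) - 2 * dotv y (mu_th th) + 2^-1 * pen th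
  + 32 * Khat2 * KL_pi pi th.

End Aggregation.

Definition grad (R : realType) (M : nat) (F : 'cV[R]_M -> R) (th0 : 'cV[R]_M)
  : 'cV[R]_M := \col_(i < M) derive F th0 (delta_mx i 0 : 'cV[R]_M).

Definition convex_on (R : realType) (M : nat) (S : 'cV[R]_M -> Prop)
  (F : 'cV[R]_M -> R) : Prop :=
  forall th1 th2 (t : R), S th1 -> S th2 -> 0 <= t <= 1 ->
    F (t *: th1 + (1 - t) *: th2) <= t * F th1 + (1 - t) * F th2.

(* Main.v *)
Require Import Defs.
From HB Require Import structures.
From mathcomp Require Import all_boot all_order all_algebra.
From mathcomp Require Import all_classical all_reals all_analysis.
From mathcomp Require Import ring lra.
Import Order.TTheory GRing.Theory Num.Theory.
Import numFieldNormedType.Exports.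
Local Open Scope ring_scope.

Section DC.
Local Open Scope classical_set_scope.
Lemma derive_cubic (R : realType) (V : normedModType R) (f : V -> R) (a v : V) (be ga de : R) :
  (forall h : R, f (h *: v + a) = f a + h * be + h ^+ 2 * ga + h ^+ 3 * de) ->
  derive f a v = be.
Proof.
move=> hf; rewrite /derive.
have E : \forall h \near 0^',
   (be + h * ga + h ^+ 2 * de = h^-1 *: ((f \o shift a) (h *: v) - f a)).
  near=> h.
  have h0 : h != 0 by near: h; exact: nbhs_dnbhs_neq.
  rewrite /= /shift hf /GRing.scale /=. field. exact h0.
have C : (fun h : R => be + h * ga + h ^+ 2 * de) @ 0^' --> be + 0 * ga + 0 ^+ 2 * de.
  apply: cvg_within_filter.
  apply: cvgD; [apply: cvgD; [exact: cvg_cst| apply: cvgM; [exact: cvg_id | exact: cvg_cst]]|].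
  apply: cvgM; [|exact: cvg_cst]. under eq_fun do rewrite expr2. rewrite expr2. apply: cvgM; exact: cvg_id.
rewrite mul0r expr0n /= mul0r !addr0 in C.
apply: cvg_lim => //.
apply: (cvg_trans _ C).
apply: near_eq_cvg. near=> h. near: h. exact: E.
Unshelve. all: by end_near.
Qed.
End DC.

Section Core.
Variables (R : realType) (n M : nat) (m : 'I_M -> 'cV[R]_n) (a : 'I_M -> R).

Definition Sv (th : 'cV[R]_M) : R := \sum_(j < M) th j 0.
Definition muv (th : 'cV[R]_M) : 'cV[R]_n := \sum_(j < M) th j 0 *: m j.
Definition Lv (th : 'cV[R]_M) : R := \sum_(j < M) th j 0 * a j.
Definition G (th : 'cV[R]_M) : R := 2^-1 * (Sv th * sqnorm (muv th)) + Lv th.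

Lemma SvL h v w : Sv (h *: v + w) = h * Sv v + Sv w.
Proof.
rewrite /Sv mulr_sumr -big_split /=; apply: eq_bigr => j _; by rewrite !mxE.
Qed.
Lemma LvL h v w : Lv (h *: v + w) = h * Lv v + Lv w.
Proof.
rewrite /Lv mulr_sumr -big_split /=; apply: eq_bigr => j _; rewrite !mxE; ring.
Qed.
Lemma muvL h v w : muv (h *: v + w) = h *: muv v + muv w.
Proof.
rewrite /muv scaler_sumr -big_split /=; apply: eq_bigr => j _.
by rewrite !mxE scalerDl scalerA.
Qed.

Lemma dotvC k (u v : 'cV[R]_k) : dotv u v = dotv v u.
Proof. by apply: eq_bigr => i _; rewrite mulrC. Qed.
Lemma dotvL k h (u v w : 'cV[R]_k) : dotv (h *: u + v) w = h * dotv u w + dotv v w.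
Proof.
rewrite /dotv mulr_sumr -big_split /=; apply: eq_bigr => j _; rewrite !mxE; ring.
Qed.
Lemma sqnormE k (u : 'cV[R]_k) : sqnorm u = dotv u u.
Proof. by apply: eq_bigr => i _; rewrite expr2. Qed.
Lemma sqnormL k h (u w : 'cV[R]_k) :
  sqnorm (h *: u + w) = h ^+ 2 * sqnorm u + 2 * h * dotv u w + sqnorm w.
Proof.
rewrite /sqnorm /dotv mulr_sumr mulr_sumr -!big_split /=; apply: eq_bigr => j _.
rewrite !mxE; ring.
Qed.
Lemma sqnorm_ge0 k (u : 'cV[R]_k) : 0 <= sqnorm u.
Proof. by apply: sumr_ge0 => i _; rewrite sqr_ge0. Qed.

Lemma G_exp h v th :
  G (h *: v + th) = G th
   + h * (2^-1 * (Sv v * sqnorm (muv th) + 2 * Sv th * dotv (muv v) (muv th)) + Lv v)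
   + h ^+ 2 * (2^-1 * (2 * Sv v * dotv (muv v) (muv th) + Sv th * sqnorm (muv v)))
   + h ^+ 3 * (2^-1 * (Sv v * sqnorm (muv v))).
Proof. rewrite /G SvL LvL muvL sqnormL. ring. Qed.

End Core.
Arguments G {R n M}. Arguments Sv {R M}. Arguments muv {R n M}. Arguments Lv {R M}.
Arguments G_exp {R n M}.
Arguments derive_cubic {R V f a v be ga de}.


Section D.
Variables (R : realType) (M : nat).
Implicit Types (f g : 'cV[R]_M -> R) (x : 'cV[R]_M).

Lemma dadd f g x : differentiable f x -> differentiable g x ->
  differentiable (fun t => f t + g t) x.
Proof. move=> df dg; exact: (differentiableD df dg). Qed.
Lemma dmul f g x : differentiable f x -> differentiable g x ->
  differentiable (fun t => f t * g t) x.
Proof. move=> df dg; exact: (differentiableM df dg). Qed.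
Lemma dcst' (c : R) x : differentiable (fun _ : 'cV[R]_M => c) x.
Proof. exact: differentiable_cst. Qed.
Lemma dcoord j x : differentiable (fun t : 'cV[R]_M => t j 0) x.
Proof. exact: differentiable_coord. Qed.
Lemma dsum k (F : 'I_k -> 'cV[R]_M -> R) x : (forall i, differentiable (F i) x) ->
  differentiable (fun t => \sum_(i < k) F i t) x.
Proof.
move=> dF; elim: k F dF => [|k IH] F dF.
  under eq_fun do rewrite big_ord0. exact: dcst'.
under eq_fun do rewrite big_ord_recr /=.
apply: dadd; last exact: dF.
exact: (IH (fun i => F (widen_ord (leqnSn k) i))).
Qed.
End D.

Lemma G_diff (R : realType) n M (m : 'I_M -> 'cV[R]_n) a x : differentiable (G m a) x.
Proof.
have -> : G m a = fun th => 2^-1 * (Sv th * \sum_(i < n)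
   ((\sum_(j < M) th j 0 * m j i 0) * (\sum_(j < M) th j 0 * m j i 0))) + Lv a th.
  apply: funext => th; rewrite /G /sqnorm; congr (_ * (_ * _) + _).
  apply: eq_bigr => i _; rewrite expr2 /muv summxE.
  by under eq_bigr do rewrite mxE.
apply: dadd; last by apply: dsum => j; apply: dmul; [exact: dcoord|exact: dcst'].
apply: dmul; first exact: dcst'.
apply: dmul; first by apply: dsum => j; exact: dcoord.
apply: dsum => i; apply: dmul; by apply: dsum => j; apply: dmul; [exact: dcoord|exact: dcst'].
Qed.


Section Gr.
Variables (R : realType) (n M : nat) (m : 'I_M -> 'cV[R]_n) (a : 'I_M -> R).

Lemma dotv_muv w v : dotv (muv m w) v = \sum_(j < M) w j 0 * dotv (m j) v.
Proof.
rewrite /dotv /muv. under eq_bigr => i _ do rewrite summxE big_distrl /=.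
rewrite exchange_big /=; apply: eq_bigr => j _; rewrite mulr_sumr.
apply: eq_bigr => i _; rewrite !mxE; ring.
Qed.

Lemma Sv_delta i : Sv (delta_mx i 0 : 'cV[R]_M) = 1.
Proof.
rewrite /Sv (bigD1 i) //= big1 => [|j hj]; rewrite mxE ?eqxx ?(negbTE hj) //.
by rewrite addr0.
Qed.
Lemma Lv_delta i : Lv a (delta_mx i 0 : 'cV[R]_M) = a i.
Proof.
rewrite /Lv (bigD1 i) //= big1 => [|j hj]; rewrite mxE ?eqxx ?(negbTE hj) //=.
  by rewrite mul1r addr0.
by rewrite mul0r.
Qed.
Lemma muv_delta i : muv m (delta_mx i 0 : 'cV[R]_M) = m i.
Proof.
rewrite /muv (bigD1 i) //= big1 => [|j hj]; rewrite mxE ?eqxx ?(negbTE hj) //=.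
  by rewrite scale1r addr0.
by rewrite scale0r.
Qed.

Lemma grad_G th0 w :
  dotv (grad (G m a) th0) w =
  2^-1 * (Sv w * sqnorm (muv m th0) + 2 * Sv th0 * dotv (muv m w) (muv m th0)) + Lv a w.
Proof.
rewrite dotv_muv {1}/dotv /grad.
under eq_bigr => i _ do rewrite mxE (derive_cubic (fun h => G_exp m a h (delta_mx i 0) th0))
  Sv_delta Lv_delta muv_delta.
set s := Sv th0; set Q := sqnorm _.
rewrite /Sv /Lv mulr_suml [2 * s * _]mulr_sumr.
rewrite -big_split /= [2^-1 * _]mulr_sumr -big_split /=.
apply: eq_bigr => i _; ring.
Qed.
End Gr.


Section Red.
Variables (R : realType) (n M : nat) (y : 'cV[R]_n)
  (A : 'I_M -> 'M[R]_n) (b : 'I_M -> 'cV[R]_n).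

Lemma mu_eq th : mu_th y A b th = muv (mu_j y A b) th.
Proof.
rewrite /mu_th /muv /A_th /b_th mulmx_suml -big_split /=.
apply: eq_bigr => j _; by rewrite -scalemxAl -scalerDr.
Qed.

Lemma Lv_lin (a1 a2 : 'I_M -> R) x1 x2 th :
  Lv (fun j => x1 * a1 j + x2 * a2 j) th = x1 * Lv a1 th + x2 * Lv a2 th.
Proof.
rewrite /Lv !mulr_sumr -big_split /=; apply: eq_bigr => j _; ring.
Qed.

Lemma dot_eq th : dotv y (mu_th y A b th) = Lv (fun j => dotv y (mu_j y A b j)) th.
Proof. by rewrite dotvC mu_eq dotv_muv /Lv; under eq_bigr do rewrite dotvC. Qed.

Lemma tr_eq th : \tr (A_th A th) = Lv (fun j => \tr (A j)) th.
Proof. rewrite /A_th raddf_sum /Lv; apply: eq_bigr => j _; exact: mxtraceZ. Qed.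

Lemma pen_eq th : pen y A b th =
  Sv th * sqnorm (mu_th y A b th) - 2 * sqnorm (mu_th y A b th)
  + Lv (fun j => sqnorm (mu_j y A b j)) th.
Proof.
rewrite /pen mu_eq; set m := mu_j y A b; set u := muv m th.
have E j : sqnorm (u - m j) = sqnorm u - 2 * dotv (m j) u + sqnorm (m j).
  rewrite addrC -scaleN1r sqnormL; ring.
under eq_bigr do rewrite E.
have -> : sqnorm u = dotv u u by rewrite sqnormE.
rewrite {2 3}/u dotv_muv /Sv /Lv. set P := \sum_(j < M) _ * dotv _ _.
rewrite mulr_suml [2 * P]mulr_sumr -sumrB -big_split /=.
apply: eq_bigr => j _; ring.
Qed.
End Red.


Section Main.
Variables (R : realType) (n M : nat) (m : 'I_M -> 'cV[R]_n) (a : 'I_M -> R).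

Lemma SvB (u v : 'cV[R]_M) : Sv (u - v) = Sv u - Sv v.
Proof. by rewrite /Sv -sumrB; apply: eq_bigr => j _; rewrite !mxE. Qed.
Lemma muvB (u v : 'cV[R]_M) : muv m (u - v) = muv m u - muv m v.
Proof. by rewrite -scaleN1r addrC muvL addrC scaleN1r. Qed.

Lemma exp_simplex h v th0 : Sv th0 = 1 -> Sv v = 0 ->
  G m a (h *: v + th0) = G m a th0
    + h * (dotv (muv m v) (muv m th0) + Lv a v) + h ^+ 2 * (2^-1 * sqnorm (muv m v)).
Proof. move=> h1 h0; by rewrite G_exp h1 h0; field. Qed.

Lemma decomp (th th0 : 'cV[R]_M) : th = 1 *: (th - th0) + th0.
Proof. by rewrite scale1r subrK. Qed.

Lemma simplex_sum {th0 : 'cV[R]_M} : simplex th0 -> Sv th0 = 1.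
Proof. by case. Qed.

Lemma main_G : let F := G m a in
  [/\ convex_on (@simplex R M) F,
      (forall th : 'cV[R]_M, differentiable F th),
      (forall th th0 : 'cV[R]_M, simplex th -> simplex th0 ->
         F th = F th0 + dotv (grad F th0) (th - th0)
                + 2^-1 * sqnorm (muv m th - muv m th0))
    & (forall thhat : 'cV[R]_M, simplex thhat ->
         (forall th, simplex th -> F thhat <= F th) ->
         forall th, simplex th ->
           F th >= F thhat + 2^-1 * sqnorm (muv m th - muv m thhat))].
Proof.
move=> F; split.
- move=> th1 th2 t s1 s2 /andP[t0 t1].
  have E : t *: th1 + (1 - t) *: th2 = t *: (th1 - th2) + th2.
    by apply/matrixP => i j; rewrite !mxE; ring.
  have Sv1 := simplex_sum s1; have Sv2 := simplex_sum s2.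
  have Sv0 : Sv (th1 - th2) = 0 by rewrite SvB Sv1 Sv2 subrr.
  rewrite /F E (exp_simplex t _ _ Sv2 Sv0).
  rewrite [in G m a th1](decomp th1 th2) (exp_simplex 1 _ _ Sv2 Sv0).
  have q0 : 0 <= sqnorm (muv m (th1 - th2)) by apply: sqnorm_ge0.
  set q := sqnorm _ in q0 *; set D := _ + Lv a _.
  have h3 : 0 <= t * (1 - t) * q by rewrite mulr_ge0 // mulr_ge0 // subr_ge0.
  rewrite expr1n !mul1r; nra.
- move=> th; exact: G_diff.
- move=> th th0 s s0.
  have Sv1 := simplex_sum s; have Sv2 := simplex_sum s0.
  have Sv0 : Sv (th - th0) = 0 by rewrite SvB Sv1 Sv2 subrr.
  rewrite /F grad_G [in G m a th](decomp th th0) (exp_simplex 1 _ _ Sv2 Sv0) Sv0 Sv2 -muvB.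
  by field.
- move=> th0 s0 hmin th s.
  have Sv1 := simplex_sum s; have Sv2 := simplex_sum s0.
  have Sv0 : Sv (th - th0) = 0 by rewrite SvB Sv1 Sv2 subrr.
  have q0 : 0 <= sqnorm (muv m (th - th0)) by apply: sqnorm_ge0.
  set q := sqnorm _ in q0.
  set D := dotv (muv m (th - th0)) (muv m th0) + Lv a (th - th0).
  have key t : 0 < t -> t <= 1 -> 0 <= t * D + t ^+ 2 * (2^-1 * q).
    move=> tp t1.
    have st : simplex (t *: (th - th0) + th0).
      split; last by rewrite -[LHS]/(Sv _) SvL Sv0 Sv2 mulr0 add0r.
      move=> j; rewrite !mxE.
      have := s.1 j; have := s0.1 j; nra.
    have := hmin _ st; rewrite /F (exp_simplex t _ _ Sv2 Sv0) -/D -/q; lra.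
  have D0 : 0 <= D.
    rewrite leNgt; apply/negP => Dn.
    have qD : 0 < q - D by lra.
    pose t := - D / (q - D).
    have tq : t * (q - D) = - D by rewrite /t mulfVK // gt_eqF.
    have tp : 0 < t by rewrite /t divr_gt0 // oppr_gt0.
    have t1 : t <= 1 by rewrite /t ler_pdivrMr // mul1r; lra.
    have := key t tp t1; nra.
  rewrite -muvB /F [in G m a th](decomp th th0) (exp_simplex 1 _ _ Sv2 Sv0) -/D -/q.
  rewrite expr1n !mul1r; lra.
Qed.
End Main.


Lemma Lv3 (R : realType) M (f g h : 'I_M -> R) x1 x2 x3 th :
  Lv (fun j => x1 * f j + x2 * g j + x3 * h j) th = x1 * Lv f th + x2 * Lv g th + x3 * Lv h th.
Proof. rewrite /Lv !mulr_sumr -!big_split /=; apply: eq_bigr => j _; ring. Qed.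
Lemma Lv4 (R : realType) M (f g h k : 'I_M -> R) x1 x2 x3 x4 th :
  Lv (fun j => x1 * f j + x2 * g j + x3 * h j + x4 * k j) th =
  x1 * Lv f th + x2 * Lv g th + x3 * Lv h th + x4 * Lv k th.
Proof. rewrite /Lv !mulr_sumr -!big_split /=; apply: eq_bigr => j _; ring. Qed.

Theorem lemma8p1 (R : realType) (n M : nat) (y : 'cV[R]_n)
  (A : 'I_M -> 'M[R]_n) (b : 'I_M -> 'cV[R]_n)
  (sig2 sighat2 Khat2 : R) (pi : 'I_M -> R)
  (hsig2 : 0 < sig2) (hK : 0 <= Khat2)
  (hpi : simplex (\col_(j < M) pi j)) (hpipos : forall j, 0 < pi j)
  (F : 'cV[R]_M -> R)
  (hF : F = Hpen y A b sig2 \/ F = Vpen y A b sig2 pi \/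
        F = Wpen y A b sighat2 \/ F = Ufun y A b Khat2 pi) :
  [/\ convex_on (@simplex R M) F,
      (forall th : 'cV[R]_M, differentiable F th),
      (forall th th0 : 'cV[R]_M, simplex th -> simplex th0 ->
         F th = F th0 + dotv (grad F th0) (th - th0)
                + 2^-1 * sqnorm (mu_th y A b th - mu_th y A b th0))
    & (forall thhat : 'cV[R]_M, simplex thhat ->
         (forall th, simplex th -> F thhat <= F th) ->
         forall th, simplex th ->
           F th >= F thhat + 2^-1 * sqnorm (mu_th y A b th - mu_th y A b thhat))].
Proof.
set m := mu_j y A b.
have hmu : mu_th y A b = muv m by apply: funext => th; rewrite mu_eq.
set d := fun j => dotv y (m j).
set s := fun j => sqnorm (m j).
set tr := fun j => \tr (A j).
set l := fun j => ln (pi j)^-1.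
have [a ->] : exists a, F = G m a.
  case: hF => [->|[->|[->|->]]].
  - exists (fun j => (-2) * d j + (2 * sig2) * tr j + 2^-1 * s j).
    apply: funext => th; rewrite /G Lv3 /Hpen pen_eq dot_eq tr_eq hmu.
    by field.
  - exists (fun j => (-2) * d j + (2 * sig2) * tr j + 2^-1 * s j + (46 * sig2) * l j).
    apply: funext => th; rewrite /G Lv4 /Vpen /Hpen pen_eq dot_eq tr_eq hmu.
    rewrite /KL_pi -/(Lv l th). by field.
  - exists (fun j => (-2) * d j + (2 * sighat2) * tr j + 2^-1 * s j).
    apply: funext => th; rewrite /G Lv3 /Wpen pen_eq dot_eq tr_eq hmu.
    by field.
  - exists (fun j => (-2) * d j + 2^-1 * s j + (32 * Khat2) * l j).
    apply: funext => th; rewrite /G Lv3 /Ufun pen_eq dot_eq hmu.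
    rewrite /KL_pi -/(Lv l th). by field.
rewrite hmu; exact: main_G.
Qed.
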